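(* Let $X$ be a finite set and let $\{A_1,\ldots,A_k\}$ and $\{B_1,\ldots,B_k\}$ be two partitions of $X$ with $|A_i|=|B_i|$ for every $i=1,\ldots,k$. Let $\mathcal G=(V,E)$ be the directed graph on the nodes $V=\{1,\ldots,k\}$ in which $(i,j)\in E$ if and only if $A_i\cap B_j\neq\emptyset$. If $(i,j)\in E$, then there exists a directed path from $j$ to $i$.
   Context: A directed path from $i$ to $j$ is a sequence of nodes $i_1i_2\ldots i_q$ with $i_1=i$, $i_q=j$ and $(i_a,i_{a+1})\in E$ for all $a$; the one-node sequence $i$ is a directed path from $i$ to itself. Partition members may be empty. *)

(* Defs.v *)
From mathcomp Require Import all_boot.
Set Implicit Arguments. Unset Strict Implicit. Unset Printing Implicit Defensive.

(* An indexed family A_1..A_k of subsets of the finite set X is a partition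
   of X: pairwise disjoint members (members may be empty) covering X. *)
Definition is_partition (X : finType) (k : nat) (A : 'I_k -> {set X}) : Prop :=
  (forall i j : 'I_k, i != j -> [disjoint A i & A j]) /\
  \bigcup_(i < k) A i = [set: X].

Definition meet_edge (X : finType) (k : nat) (A B : 'I_k -> {set X}) : rel 'I_k :=
  fun i j => A i :&: B j != set0.

Definition dir_path (V : eqType) (e : rel V) (i j : V) : Prop :=
  exists p : seq V, path e i p && (last i p == j).

(* Main.v *)
Require Import Defs.
From mathcomp Require Import all_boot.

Lemma part_fun (X : finType) (k : nat) (A : 'I_k -> {set X}) (i0 : 'I_k) :
  is_partition A -> exists f : X -> 'I_k, forall x l, (x \in A l) = (f x == l).
Proof.
move=> [dis cov].
exists (fun x => odflt i0 [pick l | x \in A l]) => x l.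
case: pickP => [l' Hl'|H] /=.
  apply/idP/eqP => [Hl|<-//].
  apply/eqP; apply: contraT => ne.
  by rewrite (disjointFr (dis _ _ ne) Hl') in Hl.
have : x \in \bigcup_(i < k) A i by rewrite cov inE.
by case/bigcupP => l' _; rewrite H.
Qed.

Theorem lemma3p25 (X : finType) (k : nat) (A B : 'I_k -> {set X}) :
  is_partition A -> is_partition B ->
  (forall i : 'I_k, #|A i| = #|B i|) ->
  forall i j : 'I_k, meet_edge A B i j -> dir_path (meet_edge A B) j i.
Proof.
move=> pA pB hc i j hij.
have [fa Ha] := @part_fun _ _ A i pA.
have [fb Hb] := @part_fun _ _ B i pB.
set e := meet_edge A B.
suff: connect e j i.
  by case/connectP => p hp hl; exists p; rewrite hp -hl eqxx.
set S := [set l | connect e j l].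
have clos : forall x, fa x \in S -> fb x \in S.
  move=> x; rewrite !inE => hc1; apply: connect_trans hc1 (connect1 _).
  rewrite /e /meet_edge; apply/set0Pn; exists x; by rewrite inE Ha Hb !eqxx.
have cardS : forall f : X -> 'I_k, (forall l, #|[set x | f x == l]| = #|A l|) ->
    #|[set x | f x \in S]| = \sum_(l in S) #|A l|.
  move=> f hf; rewrite -sum1_card (partition_big f (mem S)) /=; last first.
    by move=> x; rewrite inE.
  apply: eq_bigr => l lS; rewrite -hf -sum1_card; apply: eq_bigl => x.
  rewrite !inE; case: eqP => [->|_]; rewrite ?andbF ?andbT //; by move: lS; rewrite inE.
have eqA : forall l, #|[set x | fa x == l]| = #|A l|.
  by move=> l; apply: eq_card => x; rewrite inE Ha.
have eqB : forall l, #|[set x | fb x == l]| = #|A l|.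
  by move=> l; rewrite hc; apply: eq_card => x; rewrite inE Hb.
have sub : [set x | fa x \in S] \subset [set x | fb x \in S].
  by apply/subsetP => x; move: (clos x); rewrite !inE.
have eqS : [set x | fa x \in S] = [set x | fb x \in S].
  by apply/eqP; rewrite eqEcard sub /= (cardS _ eqA) (cardS _ eqB).
case/set0Pn: hij => x; rewrite inE Ha Hb => /andP[/eqP ha /eqP hb].
have : x \in [set x | fb x \in S] by rewrite inE hb inE connect0.
by rewrite -eqS !inE ha.
Qed.
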